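(* Let $\Sigma$ be a finite alphabet, $m,n$ positive integers with $m\le n$, $u,v\in\Sigma^\star$, and $r\in R_{m,n}(u)\cap R_{m,n}(v)$. Let $i_1,i_2\in[1,|u|]$, $j_1,j_2\in[1,|v|]$ with $\operatorname{ord}(r(u),i_1)\ne\operatorname{ord}(r(v),j_1)$. Then Samson has a winning strategy in the game $\mathrm{FO}^2_{m,n}((u,i_1,i_2),(v,j_1,j_2))$. Moreover, Samson has such a winning strategy whose first move is on $u$ if either $r$ ends with $\triangleright$, $r(u)\le i_1$ and $r(v)\ge j_1$, or $r$ ends with $\triangleleft$, $r(u)\ge i_1$ and $r(v)\le j_1$; and he has such a winning strategy whose first move is on $v$ if either $r$ ends with $\triangleright$, $r(u)\ge i_1$ and $r(v)\le j_1$, or $r$ ends with $\triangleleft$, $r(u)\le i_1$ and $r(v)\ge j_1$.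
   Context: Game $\mathrm{FO}^2_{m,n}((u,i_1,i_2),(v,j_1,j_2))$: pebble pair $x$ starts on $i_1$ in $u$ and $j_1$ in $v$, pair $y$ on $i_2$ in $u$ and $j_2$ in $v$. In each of $n$ rounds Samson picks $z\in\{x,y\}$ and places a $z$-pebble on a position of one of the words; Delilah places the mate on a position of the other word. Samson may change the word he plays on at most $m-1$ times. Samson wins if initially or after some round the map $x^u\mapsto x^v$, $y^u\mapsto y^v$ is not a partial isomorphism (pebbled letters differ or $\operatorname{ord}(x^u,y^u)\ne\operatorname{ord}(x^v,y^v)$); otherwise Delilah wins. Boundary positions: $\triangleright_a(w)=\min\{i:w_i=a\}$, $\triangleleft_a(w)=\max\{i:w_i=a\}$, $\triangleright_a(w,q)=\min\{i\in[q+1,|w|]:w_i=a\}$, $\triangleleft_a(w,q)=\max\{i\in[1,q-1]:w_i=a\}$ (undefined if empty); $\triangleright,\triangleleft$ are directions. An $n$-ranker is a sequence $r=(p_1,\dots,p_n)$ of boundary positions with $r(w)=p_1(w)$ if $n=1$, undefined if $(p_1,\dots,p_{n-1})(w)$ is undefined, else $p_n(w,(p_1,\dots,p_{n-1})(w))$; it ends with the direction of $p_n$. An $(m,n)$-ranker is an $n$-ranker whose directions form exactly $m$ maximal blocks of equal direction; $R_{m,n}(w)$ is the set of $(m,n)$-rankers defined over $w$. $\operatorname{ord}(i,j)\in\{<,=,>\}$ is the order type. *)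

(* Defs.v *)
From mathcomp Require Import all_boot.
Set Implicit Arguments. Unset Strict Implicit. Unset Printing Implicit Defensive.

Section Words.
Variable S : finType.

(* letter at 1-based position i of w (None if i is not a position of w) *)
Definition letter (w : seq S) (i : nat) : option S := onth w i.-1.

(* directions: Rgt = |> (rightward, min), Lft = <| (leftward, max) *)
Inductive dir := Rgt | Lft.
Definition dir_eqb (d e : dir) : bool :=
  match d, e with Rgt, Rgt | Lft, Lft => true | _, _ => false end.

Record bpos := BP { blet : S; bdir : dir }.

Definition rgt_from (a : S) (w : seq S) (q : nat) : option nat :=
  ohead [seq i <- iota 1 (size w) | (q < i) && (letter w i == Some a)].
Definition lft_from (a : S) (w : seq S) (q : nat) : option nat :=
  let s := [seq i <- iota 1 (size w) | (i < q) && (letter w i == Some a)] in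
  if s is [::] then None else Some (last 0 s).
Definition rgt (a : S) (w : seq S) : option nat :=
  ohead [seq i <- iota 1 (size w) | letter w i == Some a].
Definition lft (a : S) (w : seq S) : option nat :=
  let s := [seq i <- iota 1 (size w) | letter w i == Some a] in
  if s is [::] then None else Some (last 0 s).

Definition bp_eval (p : bpos) (w : seq S) : option nat :=
  match bdir p with Rgt => rgt (blet p) w | Lft => lft (blet p) w end.
Definition bp_eval_from (p : bpos) (w : seq S) (q : nat) : option nat :=
  match bdir p with Rgt => rgt_from (blet p) w q | Lft => lft_from (blet p) w q end.

Definition rk_eval (r : seq bpos) (w : seq S) : option nat :=
  match r with
  | [::] => None
  | p1 :: rest =>
      foldl (fun acc p => obind (bp_eval_from p w) acc) (bp_eval p1 w) rest
  end.

Definition nblocks (ds : seq dir) : nat :=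
  match ds with
  | [::] => 0
  | d :: ds' => (count id (pairmap (fun x y => ~~ dir_eqb x y) d ds')).+1
  end.

Definition mn_ranker (m n : nat) (r : seq bpos) : Prop :=
  size r = n /\ nblocks (map bdir r) = m.

Definition in_R (m n : nat) (w : seq S) (r : seq bpos) : Prop :=
  mn_ranker m n r /\ rk_eval r w <> None.

Definition ends_with (r : seq bpos) (d : dir) : Prop :=
  last Rgt (map bdir r) = d.

(* configuration: x on i1 (in u) / j1 (in v), y on i2 (in u) / j2 (in v) *)
Record config := Cfg { ci1 : nat; ci2 : nat; cj1 : nat; cj2 : nat }.

Definition pos_ok (w : seq S) (i : nat) : Prop := 1 <= i <= size w.

Definition piso (u v : seq S) (c : config) : Prop :=
  letter u (ci1 c) = letter v (cj1 c) /\
  letter u (ci2 c) = letter v (cj2 c) /\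
  Nat.compare (ci1 c) (ci2 c) = Nat.compare (cj1 c) (cj2 c).

(* place pebble z (true = x, false = y) at position p in u and q in v *)
Definition place (c : config) (z : bool) (p q : nat) : config :=
  if z then Cfg p (ci2 c) q (cj2 c) else Cfg (ci1 c) p (cj1 c) q.

(* Samson's chosen word: true = u, false = v. Position pu is on u, pv on v. *)
Definition move (c : config) (z side : bool) (ps pd : nat) : config :=
  if side then place c z ps pd else place c z pd ps.

Definition switch_ok (s : nat) (last : option bool) (side : bool) : bool :=
  match last with Some b => (b == side) || (0 < s) | None => true end.
Definition switch_next (s : nat) (last : option bool) (side : bool) : nat :=
  match last with Some b => if b == side then s else s.-1 | None => s end.

(* swin u v k s last c : Samson has a winning strategy from configuration c
   with k rounds remaining, at most s further word changes allowed, and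
   [last] the word he played on in the previous round (None before round 1). *)
Fixpoint swin (u v : seq S) (k s : nat) (last : option bool) (c : config)
  : Prop :=
  ~ piso u v c \/
  match k with
  | 0 => False
  | k'.+1 =>
      exists (z side : bool) (ps : nat),
        pos_ok (if side then u else v) ps /\ switch_ok s last side /\
        forall pd, pos_ok (if side then v else u) pd ->
          swin u v k' (switch_next s last side) (Some side) (move c z side ps pd)
  end.

Definition samson_wins (m n : nat) (u : seq S) (i1 i2 : nat)
  (v : seq S) (j1 j2 : nat) : Prop :=
  swin u v n m.-1 None (Cfg i1 i2 j1 j2).

(* If the initial configuration is already not a
   partial isomorphism every strategy wins, in particular one starting on
   that side. *)
Definition samson_wins_first (side : bool) (m n : nat) (u : seq S)
  (i1 i2 : nat) (v : seq S) (j1 j2 : nat) : Prop :=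
  let c := Cfg i1 i2 j1 j2 in
  ~ piso u v c \/
  match n with
  | 0 => False
  | n'.+1 =>
      exists (z : bool) (ps : nat),
        pos_ok (if side then u else v) ps /\
        forall pd, pos_ok (if side then v else u) pd ->
          swin u v n' m.-1 (Some side) (move c z side ps pd)
  end.

End Words.

(* Main.v *)
Require Import Defs.
From Stdlib Require Import Classical Arith.
From mathcomp Require Import all_boot zify.
Set Implicit Arguments. Unset Strict Implicit.

Definition swapc (c : config) := Cfg (cj1 c) (cj2 c) (ci1 c) (ci2 c).
Definition fu (c : config) (z : bool) := if z then ci1 c else ci2 c.
Definition fv (c : config) (z : bool) := if z then cj1 c else cj2 c.

Definition firstw (S : finType) (side : bool) (k s : nat) (u v : seq S) (c : config) : Prop :=
  ~ piso u v c \/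
  match k with
  | 0 => False
  | k'.+1 =>
      exists (z : bool) (ps : nat),
        pos_ok (if side then u else v) ps /\
        forall pd, pos_ok (if side then v else u) pd ->
          swin u v k' s (Some side) (move c z side ps pd)
  end.

Lemma piso_swap (S : finType) (u v : seq S) c : piso u v c -> piso v u (swapc c).
Proof. by case: c => i1 i2 j1 j2; rewrite /piso /= => -[-> [-> ->]]. Qed.

Lemma swapcK c : swapc (swapc c) = c. Proof. by case: c. Qed.
Lemma piso_swap' (S : finType) (u v : seq S) c : piso v u (swapc c) -> piso u v c.
Proof. by move/piso_swap; rewrite swapcK. Qed.

Lemma move_swap c z side ps pd :
  move (swapc c) z (~~ side) ps pd = swapc (move c z side ps pd).
Proof. by case: c z side => i1 i2 j1 j2 [] []. Qed.

Lemma swin_swap (S : finType) (u v : seq S) k : forall s last c,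
  swin u v k s last c -> swin v u k s (omap negb last) (swapc c).
Proof.
elim: k => [|k IH] s last c /=.
  case=> // H; by left => Hp; apply: H; apply: piso_swap'.
case=> [H|[z [side [ps [Hps [Hok Hall]]]]]].
  by left => Hp; apply: H; apply: piso_swap'.
right; exists z, (~~ side), ps; split; first by clear -Hps; case: side Hps.
split; first by clear -Hok; move: Hok; case: last => [[]|] //; case: side.
move=> pd Hpd; rewrite move_swap.
have -> : switch_next s (omap negb last) (~~ side) = switch_next s last side.
  by clear; case: last => [[]|] //; case: side.
apply: (IH _ (Some side)); apply: Hall; by clear -Hpd; case: side Hpd.
Qed.

Lemma firstw_swap (S : finType) (u v : seq S) side k s c :
  firstw side k s u v c -> firstw (~~ side) k s v u (swapc c).
Proof.
case=> [H|]; first by left => Hp; apply: H; apply: piso_swap'.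
case: k => // k [z [ps [Hps Hall]]]; right; exists z, ps; split; first by clear -Hps; case: side Hps.
move=> pd Hpd; rewrite move_swap; apply: (swin_swap (last:=Some side)); apply: Hall.
by clear -Hpd; case: side Hpd.
Qed.

Lemma swin_mono (S : finType) (u v : seq S) k : forall s s' last c,
  s <= s' -> swin u v k s last c -> swin u v k s' last c.
Proof.
elim: k => [|k IH] s s' last c Hs /=; first by [].
case=> [H|[z [side [ps [Hps [Hok Hall]]]]]]; first by left.
right; exists z, side, ps; split => //; split.
  by clear -Hok Hs; case: last Hok => [b|] //= /orP [->|H]; rewrite ?orbT //; apply/orP; right; lia.
move=> pd Hpd; apply: IH (Hall pd Hpd).
by clear -Hs; case: last => [b|] //=; case: (b == side) => //; lia.
Qed.

Lemma swin_none_some (S : finType) (u v : seq S) k s b c :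
  swin u v k s None c -> swin u v k s.+1 (Some b) c.
Proof.
case: k => [|k] /=; first by [].
case=> [H|[z [side [ps [Hps [_ Hall]]]]]]; first by left.
right; exists z, side, ps; split => //; split; first by rewrite orbT.
move=> pd Hpd; apply: swin_mono (Hall pd Hpd); by case: (b == side).
Qed.

Lemma firstw_swin (S : finType) (u v : seq S) side k s c :
  firstw side k s u v c -> swin u v k s (Some side) c.
Proof.
case=> [H|]; first by case: k; left.
case: k => // k [z [ps [Hps Hall]]]; right; exists z, side, ps; split => //.
by rewrite /= eqxx.
Qed.

Lemma firstw_swin_none (S : finType) (u v : seq S) side k s c :
  firstw side k s u v c -> swin u v k s None c.
Proof.
case=> [H|]; first by case: k; left.
case: k => // k [z [ps [Hps Hall]]]; right; exists z, side, ps; split => //.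
Qed.

Lemma piso_move (S : finType) (u v : seq S) c z ps pd :
  piso u v (move c (~~ z) true ps pd) ->
  letter u ps = letter v pd /\ Nat.compare ps (fu c z) = Nat.compare pd (fv c z).
Proof.
case: z; rewrite /piso /move /place /fu /fv /= => -[h1 [h2 h3]]; split => //.
by rewrite Nat.compare_antisym h3 -Nat.compare_antisym.
Qed.

Lemma cmp_cases a b c d : Nat.compare a b <> Nat.compare c d ->
  (a <= b /\ d <= c) \/ (b <= a /\ c <= d).
Proof. case: (Nat.compare_spec a b) => h1; case: (Nat.compare_spec c d) => h2 // _; lia. Qed.

Lemma cmp_rgt pu i pd j pv : pu <= i -> j <= pv ->
  Nat.compare pu i = Nat.compare pd j -> Nat.compare pu i <> Nat.compare pv j -> pd < pv.
Proof.
move=> h1 h2; case: (Nat.compare_spec pu i) => h3; case: (Nat.compare_spec pd j) => h4 //;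
case: (Nat.compare_spec pv j) => h5 // _ _; lia.
Qed.

Lemma cmp_lft pu i pd j pv : i <= pu -> pv <= j ->
  Nat.compare pu i = Nat.compare pd j -> Nat.compare pu i <> Nat.compare pv j -> pv < pd.
Proof.
move=> h1 h2; case: (Nat.compare_spec pu i) => h3; case: (Nat.compare_spec pd j) => h4 //;
case: (Nat.compare_spec pv j) => h5 // _ _; lia.
Qed.

Lemma filter_iota_head (P : pred nat) m n p :
  ohead [seq i <- iota m n | P i] = Some p ->
  [/\ P p, m <= p < m + n & forall k, m <= k < p -> ~~ P k].
Proof.
elim: n m => [|n IH] m //=.
case Pm: (P m) => /=.
  by move=> [<-]; split => //; [lia | move=> k; lia].
move/IH => [Pp Hb Hk]; split => //; first lia.
move=> k Hk'; have [->|km] := eqVneq k m; first by rewrite Pm.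
apply: Hk; lia.
Qed.

Lemma filter_iota_last (P : pred nat) m n x0 :
  [seq i <- iota m n | P i] != [::] ->
  [/\ P (last x0 [seq i <- iota m n | P i]),
      m <= last x0 [seq i <- iota m n | P i] < m + n &
      forall k, last x0 [seq i <- iota m n | P i] < k < m + n -> ~~ P k].
Proof.
elim: n m x0 => [|n IH] m x0 //=.
case Pm: (P m) => /=.
  have [E|NE] := eqVneq [seq i <- iota m.+1 n | P i] [::].
    rewrite E /= => _; split => //; first lia.
    move=> k Hk; apply/negP => Pk.
    have : k \in [seq i <- iota m.+1 n | P i] by rewrite mem_filter Pk mem_iota; lia.
    by rewrite E.
  move=> _; have [Pp Hb Hk] := IH m.+1 m NE; split => //; first lia.
  move=> k Hk'; apply: Hk; lia.
move=> NE; have [Pp Hb Hk] := IH m.+1 x0 NE; split => //; first lia.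
move=> k Hk'; apply: Hk; lia.
Qed.

Section R.
Variable S : finType.
Implicit Types (w : seq S) (a : S).

Lemma rgt_fromP a w q p : rgt_from a w q = Some p ->
  [/\ q < p, 0 < p <= size w, letter w p = Some a &
      forall k, q < k < p -> letter w k != Some a].
Proof.
rewrite /rgt_from => /filter_iota_head [/andP [Hq /eqP Hl] Hb Hk].
split => //; try lia.
move=> k /andP [h1 h2]; have := Hk k; rewrite h1 /=; apply; lia.
Qed.

Lemma lft_fromP a w q p : lft_from a w q = Some p ->
  [/\ p < q, 0 < p <= size w, letter w p = Some a &
      forall k, p < k < q -> letter w k != Some a].
Proof.
rewrite /lft_from.
case Es: [seq i <- iota 1 (size w) | (i < q) && (letter w i == Some a)] => [|y t] // [<-].
have NE : [seq i <- iota 1 (size w) | (i < q) && (letter w i == Some a)] != [::] by rewrite Es.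
have := filter_iota_last 0 NE; rewrite Es /= => -[/andP [Hq /eqP Hl] Hb Hk].
split => //; try lia.
move=> k /andP [h1 h2].
case: (leqP k (size w)) => hk.
  have := Hk k; rewrite h2 /=; apply; lia.
rewrite /letter onth_default //; lia.
Qed.

Lemma rgt_eq a w : rgt a w = rgt_from a w 0.
Proof.
rewrite /rgt /rgt_from; congr ohead; apply: eq_in_filter => i; rewrite mem_iota => h.
by have -> : 0 < i by lia.
Qed.

Lemma lft_eq a w : lft a w = lft_from a w (size w).+1.
Proof.
rewrite /lft /lft_from.
have -> : [seq i <- iota 1 (size w) | (i < (size w).+1) && (letter w i == Some a)] =
          [seq i <- iota 1 (size w) | letter w i == Some a].
  apply: eq_in_filter => i; rewrite mem_iota => h.
  by have -> : i < (size w).+1 by lia.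
by [].
Qed.

Lemma rk_eval_rcons (r : seq (bpos S)) (p : bpos S) w P :
  rk_eval (rcons r p) w = Some P ->
  exists q, bp_eval_from p w q = Some P /\
    ((r = [::] /\ q = (if bdir p is Rgt then 0 else (size w).+1)) \/ rk_eval r w = Some q).
Proof.
case: r => [|p1 r] /=.
  move=> H; exists (if bdir p is Rgt then 0 else (size w).+1); split; last by left.
  move: H; rewrite /bp_eval /bp_eval_from; case: (bdir p); by rewrite ?rgt_eq ?lft_eq.
rewrite foldl_rcons.
case E: (foldl _ _ r) => [q|] //= H.
by exists q; split => //; right.
Qed.

Lemma count_pairmap_rcons (f : dir -> dir -> bool) x s y :
  count id (pairmap f x (rcons s y)) = count id (pairmap f x s) + f (last x s) y.
Proof.
elim: s x => [|z s IH] x /=; first by rewrite addn0 add0n.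
by rewrite IH addnA.
Qed.

Lemma nblocks_rcons (r : seq (bpos S)) (p : bpos S) : r <> [::] ->
  nblocks (map (@bdir S) (rcons r p)) =
  nblocks (map (@bdir S) r) + ~~ dir_eqb (last Rgt (map (@bdir S) r)) (bdir p).
Proof.
case: r => // p1 r _; rewrite map_rcons /= count_pairmap_rcons; lia.
Qed.

Lemma ends_rcons (r : seq (bpos S)) (p : bpos S) d : ends_with (rcons r p) d <-> bdir p = d.
Proof. by rewrite /ends_with map_rcons last_rcons. Qed.

End R.

Section C.
Variable S : finType.

Definition nb (r : seq (bpos S)) := nblocks (map (@bdir S) r).

Definition Core (r : seq (bpos S)) : Prop := forall (u v : seq S) pu pv c z,
  rk_eval r u = Some pu -> rk_eval r v = Some pv ->
  Nat.compare pu (fu c z) <> Nat.compare pv (fv c z) ->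
  (ends_with r Rgt /\ pu <= fu c z /\ fv c z <= pv) \/
  (ends_with r Lft /\ fu c z <= pu /\ pv <= fv c z) ->
  firstw true (size r) (nb r).-1 u v c.

Lemma fu_swap c z : fu (swapc c) z = fv c z. Proof. by case: z. Qed.
Lemma fv_swap c z : fv (swapc c) z = fu c z. Proof. by case: z. Qed.

Lemma fu_move c z ps pd : fu (move c (~~ z) true ps pd) (~~ z) = ps.
Proof. by case: z. Qed.
Lemma fv_move c z ps pd : fv (move c (~~ z) true ps pd) (~~ z) = pd.
Proof. by case: z. Qed.

Lemma core_first_v (r : seq (bpos S)) : Core r -> forall (u v : seq S) pu pv c z,
  rk_eval r u = Some pu -> rk_eval r v = Some pv ->
  Nat.compare pu (fu c z) <> Nat.compare pv (fv c z) ->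
  (ends_with r Rgt /\ fu c z <= pu /\ pv <= fv c z) \/
  (ends_with r Lft /\ pu <= fu c z /\ fv c z <= pv) ->
  firstw false (size r) (nb r).-1 u v c.
Proof.
move=> HC u v pu pv c z Hu Hv Hne Hc.
rewrite -[c]swapcK; apply: (firstw_swap (side:=true)).
apply: (HC v u pv pu (swapc c) z Hv Hu); rewrite fu_swap fv_swap.
  by move=> E; apply: Hne.
by case: Hc => [[h1 [h2 h3]]|[h1 [h2 h3]]]; [left|right].
Qed.

Lemma coreA (r : seq (bpos S)) : Core r -> forall (u v : seq S) pu pv c z,
  rk_eval r u = Some pu -> rk_eval r v = Some pv ->
  Nat.compare pu (fu c z) <> Nat.compare pv (fv c z) ->
  swin u v (size r) (nb r).-1 None c.
Proof.
move=> HC u v pu pv c z Hu Hv Hne.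
have Hends : ends_with r Rgt \/ ends_with r Lft.
  by rewrite /ends_with; case: last; [left|right].
have [[h1 h2]|[h1 h2]] := cmp_cases Hne; case: Hends => He.
- apply: (firstw_swin_none (side:=true)); apply: (HC u v pu pv c z) => //; left; done.
- apply: (firstw_swin_none (side:=false)); apply: (core_first_v HC Hu Hv Hne); right; done.
- apply: (firstw_swin_none (side:=false)); apply: (core_first_v HC Hu Hv Hne); left; done.
- apply: (firstw_swin_none (side:=true)); apply: (HC u v pu pv c z) => //; right; done.
Qed.

Lemma swin_npiso (u v : seq S) k s last c : ~ piso u v c -> swin u v k s last c.
Proof. by case: k; left. Qed.

Lemma core_all (r : seq (bpos S)) : r <> [::] -> Core r.
Proof.
elim/last_ind: r => [|r p IH] // _.
move=> u v pu pv c z Hu Hv Hne Hcase.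
rewrite size_rcons.
have [qu [Hpu Hqu]] := rk_eval_rcons Hu.
have [qv [Hpv Hqv]] := rk_eval_rcons Hv.
rewrite !ends_rcons in Hcase.
rewrite /bp_eval_from in Hpu Hpv.
right; exists (~~ z), pu.
set i := fu c z in Hne Hcase *; set j := fv c z in Hne Hcase *.
case Hd: (bdir p) Hpu Hpv Hqu Hqv Hcase => Hpu Hpv Hqu Hqv Hcase.
-
  case: Hcase => [[_ [h1 h2]]|[//]].
  have [qu_lt pub Lu _] := rgt_fromP Hpu.
  have [qv_lt pvb Lv Mv] := rgt_fromP Hpv.
  split; first by rewrite /pos_ok; lia.
  move=> pd Hpd; set c' := move c (~~ z) true pu pd.
  case: (classic (piso u v c')) => Hp; last by apply: swin_npiso.
  have [HL Hcmp] := piso_move Hp.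
  rewrite Lu in HL.
  have pd_lt : pd < pv := cmp_rgt h1 h2 Hcmp Hne.
  have pd_le : pd <= qv.
    case: (leqP pd qv) => // h; have := Mv pd; rewrite h pd_lt -HL eqxx.
    by move=> /(_ isT).
  case: Hqv => [[Er Eq]|Hqv']; first by move: Hpd; rewrite /pos_ok; lia.
  case: Hqu => [[Er _]|Hqu']; first by rewrite Er in Hqv'.
  have rne : r <> [::] by move=> Er; rewrite Er in Hqu'.
  have HC := IH rne.
  have Hfu : fu c' (~~ z) = pu by apply: fu_move.
  have Hfv : fv c' (~~ z) = pd by apply: fv_move.
  have Hne' : Nat.compare qu pu <> Nat.compare qv pd.
    case: (Nat.compare_spec qu pu) => a1; case: (Nat.compare_spec qv pd) => a2 //; lia.
  rewrite /nb nblocks_rcons //.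
  case Hd': (last Rgt (map (@bdir S) r)).
  + rewrite Hd /= addn0; apply: firstw_swin.
    apply: (HC u v qu qv c' (~~ z)) => //; rewrite Hfu Hfv //.
    left; split => //; lia.
  + have Hpos : 0 < nblocks (map (@bdir S) r) by case: (r) rne.
    rewrite Hd /= addn1 /= -(prednK Hpos); apply: swin_none_some.
    apply: (coreA HC Hqu' Hqv' (z:=~~ z)); by rewrite Hfu Hfv.
-
  case: Hcase => [[//]|[_ [h1 h2]]].
  have [qu_lt pub Lu _] := lft_fromP Hpu.
  have [qv_lt pvb Lv Mv] := lft_fromP Hpv.
  split; first by rewrite /pos_ok; lia.
  move=> pd Hpd; set c' := move c (~~ z) true pu pd.
  case: (classic (piso u v c')) => Hp; last by apply: swin_npiso.
  have [HL Hcmp] := piso_move Hp.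
  rewrite Lu in HL.
  have pd_lt : pv < pd := cmp_lft h1 h2 Hcmp Hne.
  have pd_le : qv <= pd.
    case: (leqP qv pd) => // h; have := Mv pd; rewrite h pd_lt -HL eqxx.
    by move=> /(_ isT).
  case: Hqv => [[Er Eq]|Hqv']; first by move: Hpd; rewrite /pos_ok; lia.
  case: Hqu => [[Er _]|Hqu']; first by rewrite Er in Hqv'.
  have rne : r <> [::] by move=> Er; rewrite Er in Hqu'.
  have HC := IH rne.
  have Hfu : fu c' (~~ z) = pu by apply: fu_move.
  have Hfv : fv c' (~~ z) = pd by apply: fv_move.
  have Hne' : Nat.compare qu pu <> Nat.compare qv pd.
    case: (Nat.compare_spec qu pu) => a1; case: (Nat.compare_spec qv pd) => a2 //; lia.
  rewrite /nb nblocks_rcons //.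
  case Hd': (last Rgt (map (@bdir S) r)).
  + have Hpos : 0 < nblocks (map (@bdir S) r) by case: (r) rne.
    rewrite Hd /= addn1 /= -(prednK Hpos); apply: swin_none_some.
    apply: (coreA HC Hqu' Hqv' (z:=~~ z)); by rewrite Hfu Hfv.
  + rewrite Hd /= addn0; apply: firstw_swin.
    apply: (HC u v qu qv c' (~~ z)) => //; rewrite Hfu Hfv //.
    right; split => //; lia.
Qed.

End C.
Unset Implicit Arguments. Set Strict Implicit.

Theorem lemma4p2 (S : finType) (m n : nat) (u v : seq S) (r : seq (bpos S))
  (i1 i2 j1 j2 : nat) (pu pv : nat) :
  0 < m -> m <= n ->
  in_R m n u r -> in_R m n v r ->
  rk_eval r u = Some pu -> rk_eval r v = Some pv ->
  pos_ok u i1 -> pos_ok u i2 -> pos_ok v j1 -> pos_ok v j2 ->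
  Nat.compare pu i1 <> Nat.compare pv j1 ->
  samson_wins m n u i1 i2 v j1 j2 /\
  ((ends_with r Rgt /\ pu <= i1 /\ pv >= j1) \/
   (ends_with r Lft /\ pu >= i1 /\ pv <= j1) ->
     samson_wins_first true m n u i1 i2 v j1 j2) /\
  ((ends_with r Rgt /\ pu >= i1 /\ pv <= j1) \/
   (ends_with r Lft /\ pu <= i1 /\ pv >= j1) ->
     samson_wins_first false m n u i1 i2 v j1 j2).
Proof.
move=> Hm _ [[Hsz Hnb] _] _ Hu Hv _ _ _ _ Hne.
have rne : r <> [::] by move=> E; move: Hnb; rewrite E /=; lia.
have HC := core_all rne.
have E1 : size r = n by [].
have E2 : nb r = m by [].
split; last split.
- rewrite /samson_wins -E1 -E2.
  exact: (coreA HC (c:=Cfg i1 i2 j1 j2) (z:=true) Hu Hv Hne).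
- move=> Hc; rewrite /samson_wins_first -E1 -E2.
  exact: (HC u v pu pv (Cfg i1 i2 j1 j2) true Hu Hv Hne Hc).
- move=> Hc; rewrite /samson_wins_first -E1 -E2.
  exact: (core_first_v HC (c:=Cfg i1 i2 j1 j2) (z:=true) Hu Hv Hne Hc).
Qed.
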